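(* For a nonnegative integer $d$ let $P_d(x)=\sum_{i=0}^{d}\frac{(x_i)^2(x_{d-i})^2}{i!\,(d-i)!}$, where $x_i=x(x-1)\cdots(x-i+1)$, and let $R_d(x)$ be the remainder upon dividing $P_{d+1}(x)$ by $P_d(x)$, i.e. $R_d(x)=P_{d+1}(x)-\left(\frac{2}{d+1}x^2-\frac{2d}{d+1}x+\frac d2\right)P_d(x)$. Then for every integer $d\ge5$ and every real $x>d/2$, $$-0.5<\frac{R_d(x)}{P_d(x)}<0.$$ *)

(* Defs.v *)
From mathcomp Require Import all_boot all_order all_algebra.
Set Implicit Arguments. Unset Strict Implicit. Unset Printing Implicit Defensive.
Import Order.TTheory GRing.Theory Num.Theory.
Local Open Scope ring_scope.

Definition ffact {R : pzRingType} (x : R) (i : nat) : R :=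
  \prod_(j < i) (x - j%:R).

Definition Pd {R : fieldType} (d : nat) (x : R) : R :=
  \sum_(i < d.+1) (ffact x i) ^+ 2 * (ffact x (d - i)) ^+ 2
                    / ((i`!)%:R * ((d - i)`!)%:R).

Definition Rd {R : fieldType} (d : nat) (x : R) : R :=
  Pd d.+1 x - (2 / (d.+1)%:R * x ^+ 2 - 2 * d%:R / (d.+1)%:R * x + d%:R / 2) * Pd d x.

(* Main.v *)
Require Import Defs.
From mathcomp Require Import all_boot all_order all_algebra.
From mathcomp Require Import ring lra zify.
Import Order.TTheory GRing.Theory Num.Theory.
Local Open Scope ring_scope.

Section S.
Variable R : realFieldType.
Implicit Types x : R.

Definition Sw (n : nat) x (k : nat) : R :=
  (ffact x k) ^+ 2 * (ffact x (n - k)) ^+ 2 / ((k`!)%:R * ((n - k)`!)%:R).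

Lemma PdE d x : Pd d x = \sum_(i < d.+1) Sw d x i.
Proof. by []. Qed.

Lemma ffactS x k : ffact x k.+1 = ffact x k * (x - k%:R).
Proof. by rewrite /ffact big_ord_recr. Qed.

Lemma fact_neq0 k : (k`!)%:R != 0 :> R.
Proof. by rewrite pnatr_eq0 -lt0n fact_gt0. Qed.

Lemma SwA n x k : (k <= n)%N ->
  Sw n.+1 x k.+1 * k.+1%:R = Sw n x k * (x - k%:R) ^+ 2.
Proof.
move=> kn; rewrite /Sw subSS ffactS factS natrM.
have h1 := fact_neq0 k; have h2 := fact_neq0 (n - k).
have h3 : (1 + k%:R) != 0 :> R by rewrite addrC natr1 pnatr_eq0.
by field; rewrite h1 h2 h3.
Qed.

Lemma SwB n x k : (k <= n)%N ->
  Sw n.+1 x k * (n.+1%:R - k%:R) = Sw n x k * (x - (n%:R - k%:R)) ^+ 2.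
Proof.
move=> kn; rewrite /Sw subSn // ffactS factS natrM natrB //.
have h1 := fact_neq0 k; have h2 := fact_neq0 (n - k).
have h3 : (n - k).+1%:R != 0 :> R by rewrite pnatr_eq0.
move: h3; rewrite -addn1 natrD natrB // => h3.
by field; rewrite h1 h2 h3.
Qed.

Lemma L1 n x (psi : nat -> R) :
  \sum_(i < n.+2) Sw n.+1 x i * (i%:R * psi i)
  = \sum_(k < n.+1) Sw n x k * ((x - k%:R) ^+ 2 * psi k.+1).
Proof.
rewrite big_ord_recl /= mul0r mulr0 add0r; apply: eq_bigr => k _.
have kn : (k <= n)%N by rewrite -ltnS.
by rewrite /bump add1n mulrA (SwA n x k kn) mulrA.
Qed.

Lemma L2 n x (psi : nat -> R) :
  \sum_(i < n.+2) Sw n.+1 x i * ((n.+1%:R - i%:R) * psi i)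
  = \sum_(k < n.+1) Sw n x k * ((x - (n%:R - k%:R)) ^+ 2 * psi k).
Proof.
rewrite big_ord_recr /= subrr mul0r mulr0 addr0; apply: eq_bigr => k _.
have kn : (k <= n)%N by rewrite -ltnS.
by rewrite [LHS]mulrA (SwB n x k kn) mulrA.
Qed.

Lemma LS n x (psi : nat -> R) :
  n.+1%:R * \sum_(i < n.+2) Sw n.+1 x i * psi i
  = \sum_(k < n.+1) Sw n x k * ((x - k%:R) ^+ 2 * psi k.+1
                                 + (x - (n%:R - k%:R)) ^+ 2 * psi k).
Proof.
rewrite (eq_bigr (fun k : 'I_n.+1 => Sw n x k * ((x - k%:R) ^+ 2 * psi k.+1)
   + Sw n x k * ((x - (n%:R - k%:R)) ^+ 2 * psi k))); last by move=> k _; rewrite mulrDr.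
rewrite big_split /= -L1 -L2 -big_split /= mulr_sumr; apply: eq_bigr => i _.
ring.
Qed.

Definition Ms n x (g : nat -> R) := \sum_(k < n.+1) Sw n x k * g k.

Lemma LSM n x (psi : nat -> R) :
  n.+1%:R * \sum_(i < n.+2) Sw n.+1 x i * psi i
  = Ms n x (fun k => (x - k%:R) ^+ 2 * psi k.+1
                                 + (x - (n%:R - k%:R)) ^+ 2 * psi k).
Proof. exact: LS. Qed.

Lemma Ms_lin n x a b c (f g : nat -> R) :
  Ms n x (fun k => a + b * f k + c * g k)
  = a * Ms n x (fun _ => 1) + b * Ms n x f + c * Ms n x g.
Proof.
rewrite /Ms !mulr_sumr -!big_split /=; apply: eq_bigr => i _; ring.
Qed.

Lemma Ms_ext n x (f g : nat -> R) : (forall k, f k = g k) -> Ms n x f = Ms n x g.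
Proof. by move=> e; apply: eq_bigr => i _; rewrite e. Qed.

Definition Zf (N : R) x (k : nat) : R :=
  (x - k%:R) ^+ 2 * (N - k%:R) * (k%:R - N / 2 + 1 / 2)
  - k%:R * (x - N + k%:R) ^+ 2 * (k%:R - N / 2 - 1 / 2).

Lemma Stein m x : Ms m.+1 x (Zf m.+1%:R x) = 0.
Proof.
have -> : Ms m.+1 x (Zf m.+1%:R x) =
  \sum_(i < m.+2) Sw m.+1 x i * ((m.+1%:R - i%:R) *
        (fun i : nat => (x - i%:R) ^+ 2 * (i%:R - m.+1%:R / 2 + 1 / 2)) i)
  - \sum_(i < m.+2) Sw m.+1 x i * (i%:R *
        (fun i : nat => (x - m.+1%:R + i%:R) ^+ 2 * (i%:R - m.+1%:R / 2 - 1 / 2)) i).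
  by rewrite -sumrB; apply: eq_bigr => i _; rewrite /Zf /=; field.
rewrite (L1 m x (fun i : nat => (x - m.+1%:R + i%:R) ^+ 2 * (i%:R - m.+1%:R / 2 - 1 / 2)))
  (L2 m x (fun i : nat => (x - i%:R) ^+ 2 * (i%:R - m.+1%:R / 2 + 1 / 2))) -sumrB; by apply: big1 => k _ /=; field.
Qed.

Lemma Sw_ge0 n x k : 0 <= Sw n x k.
Proof.
rewrite /Sw; apply: divr_ge0; apply: mulr_ge0; rewrite ?sqr_ge0 ?ler0n //.
Qed.

Lemma ffact_gt0 x m : (forall j, (j < m)%N -> j%:R < x) -> 0 < ffact x m.
Proof.
move=> h; rewrite /ffact; apply: prodr_gt0 => j _; rewrite subr_gt0; apply: h.
exact: ltn_ord.
Qed.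

Lemma Sw_gt0 n x k : (forall j, (j < k)%N -> j%:R < x) ->
  (forall j, (j < n - k)%N -> j%:R < x) -> 0 < Sw n x k.
Proof.
move=> h1 h2; rewrite /Sw; apply: divr_gt0; apply: mulr_gt0;
  rewrite ?exprn_gt0 ?ffact_gt0 ?ltr0n ?fact_gt0 //.
Qed.

Lemma Ms_gt0 n x (g : nat -> R) k0 : (k0 < n.+1)%N -> (forall k, 0 <= g k) ->
  0 < Sw n x k0 * g k0 -> 0 < Ms n x g.
Proof.
move=> hk hg hp; rewrite /Ms (bigD1 (Ordinal hk)) //=.
have : 0 <= \sum_(i < n.+1 | i != Ordinal hk) Sw n x i * g i.
  by apply: sumr_ge0 => i _; apply: mulr_ge0; rewrite ?Sw_ge0 ?hg.
lra.
Qed.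

Lemma Ms_ge0 n x (g : nat -> R) : (forall k, 0 <= g k) -> 0 <= Ms n x g.
Proof. by move=> hg; apply: sumr_ge0 => i _; apply: mulr_ge0; rewrite ?Sw_ge0 ?hg. Qed.
End S.
Section F.
Variable R : realFieldType.
Definition Dq (N v : R) := 4 * (N+1) * v - N - 2.
Definition bq (N v : R) := v^+2 + (N-1) * v - N/4.
Definition Kq (N v : R) := 2 * (N+2) * v^+2 + Dq N v * bq N v.
Definition Fq (N v : R) := (N+2)^+2 * v^+2 + (N+2) * bq N v * Dq N v - N * (Dq N v)^+2/4.

Lemma Fpos (N v : R) : 4 <= N -> 1/2 < v -> 0 < Fq N v.
Proof.
move=> hN hv.
have -> : Fq N v = 11 + 9/2 * (N-4) + 1/2 * (N-4)^+2
  + (v-1/2) * (62 + 27 * (N-4) + 3 * (N-4)^+2)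
  + (v-1/2)^+2 * (140 + 58 * (N-4) + 6 * (N-4)^+2)
  + (v-1/2)^+3 * (120 + 44 * (N-4) + 4 * (N-4)^+2).
  by rewrite /Fq /bq /Dq; field.
set s := v - 1/2; set m := N - 4.
have hs : 0 < s by rewrite /s; lra.
have hm : 0 <= m by rewrite /m; lra.
have h0 : 0 <= m^+2 by apply: sqr_ge0.
have h1 : 0 <= s * (62 + 27 * m + 3 * m^+2) by apply: mulr_ge0; lra.
have h2 : 0 <= s^+2 * (140 + 58 * m + 6 * m^+2) by apply: mulr_ge0; [apply: sqr_ge0|lra].
have h3 : 0 <= s^+3 * (120 + 44 * m + 4 * m^+2).
  by apply: mulr_ge0; [apply: exprn_ge0; lra| lra].
lra.
Qed.

Lemma Kpos (N v : R) : 4 <= N -> 1/2 < v -> 0 < Kq N v /\ 0 < Dq N v.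
Proof.
move=> hN hv; rewrite /Kq /Dq /bq.
have hD : 0 < 4 * (N+1) * v - N - 2 by nra.
have hb : 0 < v^+2 + (N-1) * v - N/4 by nra.
split=> //; have := mulr_gt0 hD hb; have : 0 < v^+2 by nra. nra.
Qed.

Lemma final (N v x A B Y p1 p2 r : R) :
  4 <= N -> 1/2 < v -> x = v + N/2 -> 0 < A -> 0 < B -> 0 <= Y ->
  Y = (Kq N v * (N+2) * v^+2 - v^+2 * Fq N v) * A - Kq N v * Dq N v * B ->
  p1 * (N+1) = 2 * v^+2 * A + 2 * B ->
  p2 * ((N+1) * (N+2)) =
    2 * v^+2 * (2 * x^+2 - 2 * (N+1) * x + (N+1) * (N+2)/2) * A
    + (2 * (2 * x^+2 - 2 * (N+1) * x + (N+1) * (N+2)/2) - 4 * (N+1) * v) * B ->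
  r = p2 - (2 / (N+2) * x ^+ 2 - 2 * (N+1) / (N+2) * x + (N+1) / 2) * p1 ->
  - (1 / 2) < r / p1 /\ r / p1 < 0.
Proof.
move=> hN hv hx hA hB hY eY e1 e2 er.
have [hK hD] := Kpos _ _ hN hv.
have hF := Fpos _ _ hN hv.
have hN1 : N + 1 != 0 by apply/eqP; lra.
have hN2 : N + 2 != 0 by apply/eqP; lra.
have ep1 : p1 = (2 * v^+2 * A + 2 * B) / (N+1) by rewrite -e1 mulfK.
have ep2 : p2 = (2 * v^+2 * (2 * x^+2 - 2 * (N+1) * x + (N+1) * (N+2)/2) * A
    + (2 * (2 * x^+2 - 2 * (N+1) * x + (N+1) * (N+2)/2) - 4 * (N+1) * v) * B) / ((N+1) * (N+2)).
  by rewrite -e2 mulfK // mulf_neq0.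
have er2 : r = - (4 * v * B) / (N+2).
  by rewrite er ep1 ep2 hx; field; rewrite hN1 hN2.
have hp1 : 0 < p1.
  rewrite ep1; apply: divr_gt0; last lra.
  have : 0 < v^+2 by nra. nra.
have hr : r < 0 by rewrite er2 mulNr oppr_lt0; apply: divr_gt0; nra.
split; last by rewrite pmulr_llt0 ?invr_gt0.
rewrite ltr_pdivlMr //.
have er3 : (r + p1/2) * ((N+1) * (N+2)) = (N+2) * v^+2 * A - Dq N v * B.
  by rewrite er2 ep1 /Dq; field; rewrite hN1 hN2.
have hE : 0 < (N+2) * v^+2 * A - Dq N v * B.
  have : Kq N v * ((N+2) * v^+2 * A - Dq N v * B) = Y + v^+2 * Fq N v * A.
    by rewrite eY; ring.
  have : 0 < v^+2 * Fq N v * A by apply: mulr_gt0 => //; apply: mulr_gt0 => //; nra.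
  move=> h1 h2.
  have : 0 < Kq N v * ((N+2) * v^+2 * A - Dq N v * B) by rewrite h2; lra.
  by rewrite pmulr_rgt0.
have : 0 < (r + p1/2) * ((N+1) * (N+2)) by rewrite er3.
rewrite pmulr_lgt0; last by apply: mulr_gt0; lra.
lra.
Qed.
End F.

Theorem lemma1p5 (R : realFieldType) (d : nat) (x : R) :
  (5 <= d)%N -> d%:R / 2 < x ->
  - (1 / 2) < Rd d x / Pd d x /\ Rd d x / Pd d x < 0.
Proof.
case: d => [//|n] hd hx.
have hn : (4 <= n)%N by [].
have hN : (4 : R) <= n%:R by rewrite (ler_nat R 4 n).
have hx' : (n%:R + 1) / 2 < x by move: hx; rewrite -natr1.
have hv : 1 / 2 < x - n%:R / 2 by lra.
have [h [b [hb en]]] : exists h b, (b <= 1)%N /\ n = (h * 2 + b)%N.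
  exists n./2, (odd n); split; first by case: odd.
  by rewrite -[n in LHS]odd_double_half addnC -muln2.
have hk0 : (h.+1 < n.+1)%N by lia.
have hjx : forall j, (j * 2 <= n)%N -> j%:R < x.
  move=> j hj; have := hj; rewrite -(ler_nat R) natrM => hj'; lra.
have hS0 : 0 < Sw R n x h.+1.
  apply: Sw_gt0 => j hj; apply: hjx; lia.
have hu0 : 1 / 2 <= h.+1%:R - n%:R / 2 :> R.
  have e2 : (h.+1 * 2 = n + (2 - b))%N by lia.
  have := congr1 (fun m : nat => m%:R : R) e2; rewrite /= natrD natrM => e2'.
  have : (1 : R) <= (2 - b)%:R by rewrite (ler_nat R 1); lia.
  lra.
pose A := Ms R n x (fun _ => 1).
pose B := Ms R n x (fun k => (k%:R - n%:R / 2) ^+ 2).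
pose Y := Ms R n x (fun k => (Dq R n%:R (x - n%:R/2) * (k%:R - n%:R / 2) ^+ 2
                                - (n%:R + 2) * (x - n%:R/2) ^+ 2) ^+ 2).
have hA : 0 < A.
  by apply: (@Ms_gt0 R n x _ _ hk0) => [k|]; rewrite ?ler01 // mulr1.
have hB : 0 < B.
  apply: (@Ms_gt0 R n x _ _ hk0) => [k|]; first exact: sqr_ge0.
  by apply: mulr_gt0 => //; apply: exprn_gt0; lra.
have hY : 0 <= Y by apply: Ms_ge0 => k; exact: sqr_ge0.
have hZ : Ms R n x (Zf R n%:R x) = 0.
  by have := Stein R n.-1 x; rewrite prednK //; lia.
have eY : Y = (Kq R n%:R (x - n%:R/2) * (n%:R+2) * (x - n%:R/2)^+2
               - (x - n%:R/2)^+2 * Fq R n%:R (x - n%:R/2)) * A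
              - Kq R n%:R (x - n%:R/2) * Dq R n%:R (x - n%:R/2) * B.
  rewrite /Y /A /B.
  rewrite (@Ms_ext R n x _ (fun k => (Kq R n%:R (x - n%:R/2) * (n%:R+2) * (x - n%:R/2)^+2
               - (x - n%:R/2)^+2 * Fq R n%:R (x - n%:R/2))
        + (- (Kq R n%:R (x - n%:R/2) * Dq R n%:R (x - n%:R/2))) * (k%:R - n%:R / 2) ^+ 2
        + (- (Dq R n%:R (x - n%:R/2)) ^+ 2 / 2) * Zf R n%:R x k)).
    by rewrite Ms_lin hZ; ring.
  by move=> k; rewrite /Zf /Kq /Fq /Dq /bq; field.
have P1 : Pd n.+1 x = \sum_(i < n.+2) Sw R n.+1 x i * (fun _ => 1) i.
  by rewrite PdE; apply: eq_bigr => i _; rewrite mulr1.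
have P2 : Pd n.+2 x = \sum_(i < n.+3) Sw R n.+2 x i * (fun _ => 1) i.
  by rewrite PdE; apply: eq_bigr => i _; rewrite mulr1.
have e1 : Pd n.+1 x * (n%:R + 1) = 2 * (x - n%:R/2) ^+ 2 * A + 2 * B.
  rewrite P1 mulrC natr1 (LSM R n x (fun _ => 1)) /A /B.
  rewrite [LHS](@Ms_ext R n x _ (fun k => 2 * (x - n%:R/2) ^+ 2 + 2 * (k%:R - n%:R / 2) ^+ 2
                               + 0 * (k%:R - n%:R / 2) ^+ 2)).
    by rewrite Ms_lin; ring.
  by move=> k /=; field.
pose nQ := 2 * x ^+ 2 - 2 * (n%:R + 1) * x + (n%:R + 1) * (n%:R + 2) / 2.
have e2 : Pd n.+2 x * ((n%:R + 1) * (n%:R + 2)) =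
    2 * (x - n%:R/2) ^+ 2 * nQ * A
    + (2 * nQ - 4 * (n%:R + 1) * (x - n%:R/2)) * B.
  have -> : Pd n.+2 x * ((n%:R + 1) * (n%:R + 2)) =
     n.+1%:R * (n.+2%:R * Pd n.+2 x) by ring.
  rewrite P2 (LSM R n.+1 x (fun _ => 1)).
  rewrite (LSM R n x (fun i : nat => (x - i%:R)^+2 * 1 + (x - (n.+1%:R - i%:R))^+2 * 1)) /A /B /nQ.
  rewrite [LHS](@Ms_ext R n x _ (fun k => 2 * (x - n%:R/2) ^+ 2 * nQ
            + (2 * nQ - 4 * (n%:R + 1) * (x - n%:R/2)) * (k%:R - n%:R / 2) ^+ 2
            + (-2) * Zf R n%:R x k)).
    by rewrite Ms_lin hZ /nQ; ring.
  by move=> k /=; rewrite /Zf /nQ; field.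
apply: (@final R _ _ _ _ _ _ _ _ _ hN hv _ hA hB hY eY e1 e2).
  by ring.
have q2 : n.+2%:R = n%:R + 2 :> R by ring.
have q1 : n.+1%:R = n%:R + 1 :> R by ring.
rewrite /Rd.
by rewrite [n.+2%:R]q2 [n.+1%:R]q1.
Qed.
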